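(* Let $\Gamma$ be a torsion-free group and let $S$ be a non-empty free $\Gamma$-set. Then there exists a $\Gamma$-equivariant chain map $\eta\colon\mathbb{Z}[S^{*+1}]\to\mathbb{Z}[S^{*+1}]$ extending $\mathrm{id}_\mathbb{Z}$ (hence $\eta$ is $\mathbb{Z}\Gamma$-chain homotopic to the identity) such that for all $k$ and all chains $c\in\mathbb{Z}[S^{k+1}]$, \[|\eta_k(c)|_1\leq(k+1)!\cdot\|c\|_{\mathrm{ess}}.\]
   Context: $\mathbb{Z}[S^{*+1}]$ carries the boundary $\partial(s_0,\dots,s_k)=\sum_j(-1)^j(s_0,\dots,\widehat{s_j},\dots,s_k)$, the diagonal $\Gamma$-action and augmentation $s_0\mapsto1$; extending $\mathrm{id}_\mathbb{Z}$ means compatibility with this augmentation. For $c=\sum_x a_x x\in\mathbb{Z}[S^{k+1}]$, $|c|_1=\sum_x|a_x|$ and $\|c\|_{\mathrm{ess}}=\sum_{x\text{ essential}}|a_x|$, where a tuple is essential if its entries are pairwise distinct. *)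

(* Defs.v *)
From mathcomp Require Import all_boot all_order all_algebra.
From mathcomp Require monoid.
From mathcomp Require Import freeg.

Set Implicit Arguments.
Unset Strict Implicit.
Unset Printing Implicit Defensive.

Import Order.TTheory GRing.Theory Num.Theory.
Local Open Scope ring_scope.

Definition torsion_free (G : groupType) : Prop :=
  forall (g : G) (n : nat), (0 < n)%N -> monoid.natexp g n = monoid.one -> g = monoid.one.

Definition is_action (G : groupType) (S : Type) (act : G -> S -> S) : Prop :=
  (forall s, act monoid.one s = s) /\
  (forall g h s, act (monoid.mul g h) s = act g (act h s)).

Definition free_action (G : groupType) (S : Type) (act : G -> S -> S) : Prop :=
  forall g s, act g s = s -> g = monoid.one.

Definition chains (S : choiceType) (k : nat) := {freeg ((k.+1).-tuple S) / int}.

Definition face (S : Type) (k : nat) (j : 'I_k.+2) (x : (k.+2).-tuple S)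
  : (k.+1).-tuple S := [tuple tnth x (fintype.lift j i) | i < k.+1].

Definition bd (S : choiceType) (k : nat) (c : chains S k.+1) : chains S k :=
  fglift (fun x : (k.+2).-tuple S =>
            \sum_(j < k.+2) ((-1) ^+ j : int) *: (<< face j x >> : chains S k)) c.

Definition aug (S : choiceType) (c : chains S 0) : int := deg c.

Definition act_chain (G : groupType) (S : choiceType) (act : G -> S -> S)
  (k : nat) (g : G) (c : chains S k) : chains S k :=
  fglift (fun x : (k.+1).-tuple S =>
            (<< [tuple act g (tnth x i) | i < k.+1] >> : chains S k)) c.

Definition l1norm (S : choiceType) (k : nat) (c : chains S k) : int :=
  \sum_(x <- dom c) `|coeff x c|.

Definition essential (S : eqType) (k : nat) (x : (k.+1).-tuple S) : bool :=
  uniq (val x).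

Definition essnorm (S : choiceType) (k : nat) (c : chains S k) : int :=
  \sum_(x <- dom c | essential x) `|coeff x c|.

(* Main.v *)
Require Import Defs.
From mathcomp Require Import all_boot all_order all_algebra.
From mathcomp Require monoid.
From mathcomp Require Import freeg zify.
From Stdlib Require Import ClassicalEpsilon FunctionalExtensionality PropExtensionality.
Set Implicit Arguments. Unset Strict Implicit. Unset Printing Implicit Defensive.
Import Order.TTheory GRing.Theory Num.Theory.
Local Open Scope ring_scope.

Section Grp.
Variables (G : groupType) (S : choiceType) (act : G -> S -> S) (s0 : S).
Hypotheses (hG : torsion_free G) (hact : is_action act) (hfree : free_action act).

Local Notation mul := (@monoid.mul G).
Local Notation one := (@monoid.one G).
Local Notation inv := (@monoid.inv G).

Lemma act1 s : act one s = s. Proof. exact: hact.1. Qed.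
Lemma actM g h s : act (mul g h) s = act g (act h s). Proof. exact: hact.2. Qed.
Lemma actK g : cancel (act g) (act (inv g)).
Proof. by move=> s; rewrite -actM monoid.mulVg act1. Qed.
Lemma act_inj g : injective (act g). Proof. exact: can_inj (actK g). Qed.

Lemma map_act1 x : map (act one) x = x.
Proof. by rewrite (eq_map act1) map_id. Qed.
Lemma map_actM g h x : map (act (mul g h)) x = map (act g) (map (act h) x).
Proof. by rewrite -map_comp; apply: eq_map => s; rewrite /= actM. Qed.

Lemma stab_trivial h x r : r \in x -> map (act h) x =i x -> h = one.
Proof.
move=> rx hx.
have inx : forall n, act (monoid.natexp h n) r \in x.
  elim=> [|n IH]; first by rewrite monoid.expg0 act1.
  by rewrite monoid.expgS actM -hx; apply: map_f.
set l := [seq act (monoid.natexp h n) r | n <- iota 0 (size x).+1].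
have : ~~ uniq l.
  apply/negP => ul.
  have sub : {subset l <= x} by move=> y /mapP [n _ ->]; exact: inx.
  have := uniq_leq_size ul sub.
  by rewrite size_map size_iota ltnn.
case/(uniqPn r) => i [j [ij jl]].
have jl' : (j < (size x).+1)%N by move: jl; rewrite size_map size_iota.
rewrite !(nth_map 0%N) ?size_iota ?(ltn_trans ij) // !nth_iota ?(ltn_trans ij) // !add0n.
have -> : j = ((j - i) + i)%N by rewrite subnK // ltnW.
rewrite monoid.expgnDr actM => e.
have e1 := hfree (esym e).
apply: (hG (n := (j - i)%N)) => //; by rewrite subn_gt0.
Qed.

Lemma uniq_g a b x r : r \in x -> map (act a) x =i map (act b) x -> a = b.
Proof.
move=> rx e.
have h1 : mul (inv b) a = one.
  apply: (stab_trivial rx) => z.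
  rewrite map_actM -{2}(mapK (actK b) x).
  exact: eq_mem_map.
by rewrite -(monoid.mulVKg b a) h1 monoid.mulg1.
Qed.

Definition orbp (x : seq S) := fun y : seq S => exists g, map (act g) x =i y.
Definition rep (x : seq S) : seq S := epsilon (inhabits [::]) (orbp x).
Definition gsel (x : seq S) : G := epsilon (inhabits one) (fun g => map (act g) x =i rep x).
Definition vsel (x : seq S) : S := act (inv (gsel x)) (head s0 (rep x)).

Lemma rep_spec x : orbp x (rep x).
Proof. apply: epsilon_spec; exists x, one; by rewrite map_act1. Qed.

Lemma gsel_spec x : map (act (gsel x)) x =i rep x.
Proof. exact: (epsilon_spec (inhabits one) _ (rep_spec x)). Qed.

Lemma rep_eq x y h : y =i map (act h) x -> rep y = rep x.
Proof.
move=> e; rewrite /rep; congr epsilon.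
apply: functional_extensionality => z; apply: propositional_extensionality.
split; case=> g Hg.
- exists (mul g h) => w; rewrite map_actM -Hg; apply: eq_mem_map => u.
  by rewrite e.
- exists (mul g (inv h)) => w; rewrite -Hg.
  rewrite (eq_mem_map _ e) -map_actM.
  by rewrite monoid.mulgVK.
Qed.

Lemma vsel_mem x y r : r \in x -> x =i y -> vsel x = vsel y.
Proof.
move=> rx e.
have ry : rep y = rep x by apply: (rep_eq (h := one)) => z; rewrite map_act1 e.
have gy : gsel y = gsel x.
  apply: (uniq_g rx) => z.
  rewrite (eq_mem_map _ e).
  by rewrite gsel_spec gsel_spec ry.
by rewrite /vsel gy ry.
Qed.

Lemma vsel_act x h r : r \in x -> vsel (map (act h) x) = act h (vsel x).
Proof.
move=> rx.
have ry : rep (map (act h) x) = rep x by apply: (rep_eq (h := h)).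
have e : mul (gsel (map (act h) x)) h = gsel x.
  apply: (uniq_g rx) => z.
  by rewrite map_actM gsel_spec ry gsel_spec.
rewrite /vsel ry -actM; congr act.
by rewrite -e monoid.invgM monoid.mulVKg.
Qed.
End Grp.

Section Add.
Variables (U V : zmodType) (F : U -> V).
Hypothesis hF : GRing.zmod_morphism F.
Lemma addF0 : F 0 = 0. Proof. by rewrite -(subrr 0) hF subrr. Qed.
Lemma addFN a : F (- a) = - F a. Proof. by rewrite -sub0r hF addF0 sub0r. Qed.
Lemma addFD a b : F (a + b) = F a + F b.
Proof. have := hF a (- b). by rewrite opprK addFN opprK. Qed.
Lemma addFMn a m : F (a *+ m) = F a *+ m.
Proof. by elim: m => [|m IH]; rewrite ?mulr0n ?addF0 // !mulrS addFD IH. Qed.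
Lemma addFMz a n : F (a *~ n) = F a *~ n.
Proof. by case: n => m; rewrite ?NegzE ?mulrNz ?mulrz_nat ?addFN addFMn. Qed.
Lemma addFsum (I : Type) (r : seq I) (P : pred I) (E : I -> U) :
  F (\sum_(i <- r | P i) E i) = \sum_(i <- r | P i) F (E i).
Proof. exact: (big_morph F addFD addF0). Qed.
End Add.

Lemma add_comp (U V W : zmodType) (F : U -> V) (H : V -> W) :
  GRing.zmod_morphism F -> GRing.zmod_morphism H -> GRing.zmod_morphism (H \o F).
Proof. by move=> hF hH a b /=; rewrite hF hH. Qed.

Section FG.
Variable K : choiceType.
Implicit Types D : {freeg K / int}.

Lemma fgliftU (M : lmodType int) (f : K -> M) x : fglift f << x >> = f x.
Proof. by rewrite liftU scale1r. Qed.

Lemma fglift_add (M : lmodType int) (f : K -> M) : GRing.zmod_morphism (fglift f).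
Proof. exact: lift_is_additive. Qed.

Lemma scaleZ (c : int) D : c *: D = D *~ c.
Proof. by rewrite -[in LHS](intz c) scaler_int. Qed.

Lemma addFZ (M : lmodType int) (F : {freeg K / int} -> M) c D :
  GRing.zmod_morphism F -> F (c *: D) = c *: F D.
Proof. by move=> hF; rewrite scaleZ (addFMz hF) -[in RHS](intz c) scaler_int. Qed.

Lemma fg_ext (W : zmodType) (F1 F2 : {freeg K / int} -> W) :
  GRing.zmod_morphism F1 -> GRing.zmod_morphism F2 ->
  (forall x, F1 << x >> = F2 << x >>) -> forall D, F1 D = F2 D.
Proof.
move=> h1 h2 e; elim/freeg_ind_dom0 => [|k x D _ _ IH]; first by rewrite !addF0.
by rewrite !addFD // IH -[k]intz -freegU_mulz !addFMz // e.
Qed.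

Definition nrm D : int := \sum_(x <- dom D) `|coeff x D|.

Lemma nrm_seq D s : uniq s -> {subset dom D <= s} -> nrm D = \sum_(x <- s) `|coeff x D|.
Proof.
move=> us sub; rewrite /nrm [RHS](bigID (fun x => x \in dom D)) /=.
rewrite [X in _ + X]big1 ?addr0; last first.
  by move=> x /negbTE nx; rewrite coeff_outdom ?nx // normr0.
rewrite -[RHS]big_filter.
apply: perm_big; apply: uniq_perm.
- exact: uniq_dom.
- exact: filter_uniq.
- by move=> x; rewrite mem_filter; case e: (x \in dom D) => //=; rewrite sub.
Qed.

Lemma nrm_ge0 D : 0 <= nrm D.
Proof. by apply: sumr_ge0 => x _. Qed.

Lemma nrmD D1 D2 : nrm (D1 + D2) <= nrm D1 + nrm D2.
Proof.
set s := undup (dom D1 ++ dom D2).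
have us : uniq s by exact: undup_uniq.
have s1 : {subset dom D1 <= s} by move=> x h; rewrite mem_undup mem_cat h.
have s2 : {subset dom D2 <= s} by move=> x h; rewrite mem_undup mem_cat h orbT.
have s12 : {subset dom (D1 + D2) <= s}.
  by move=> x /domD_subset h; rewrite mem_undup.
rewrite (nrm_seq us s1) (nrm_seq us s2) (nrm_seq us s12) -big_split /=.
by apply: ler_sum => x _; rewrite coeffD ler_normD.
Qed.

Lemma nrm0 : nrm 0 = 0. Proof. by rewrite /nrm dom0 big_nil. Qed.

Lemma nrmZ (c : int) D : nrm (c *: D) <= `|c| * nrm D.
Proof.
have sub : {subset dom (c *: D) <= dom D} by exact: domZ_subset.
rewrite (nrm_seq (uniq_dom D) sub) /nrm mulr_sumr.
by apply: ler_sum => x _; rewrite coeffZ normrM.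
Qed.

Lemma nrmU x : nrm << x >> = 1.
Proof. by rewrite /nrm domU1 big_seq1 coeffU eqxx mulr1. Qed.

Lemma nrm_sum (I : Type) (r : seq I) (P : pred I) (E : I -> {freeg K / int}) :
  nrm (\sum_(i <- r | P i) E i) <= \sum_(i <- r | P i) nrm (E i).
Proof.
elim/big_rec2: _ => [|i y1 y2 _ IH]; first by rewrite nrm0.
by apply: le_trans (nrmD _ _) _; rewrite lerD2l.
Qed.

Lemma fg_tf D : D = - D -> D = 0.
Proof.
move=> e; apply/eqP/freeg_eqP => x; rewrite coeff0.
have : coeff x D = - coeff x D by rewrite -coeffN -e.
move/eqP; rewrite -subr_eq0 opprK -mulr2n mulrn_eq0 /=.
by move/eqP.
Qed.
End FG.

Lemma nrm_bound (K K' : choiceType) (F : {freeg K / int} -> {freeg K' / int})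
  (B : K -> int) D :
  GRing.zmod_morphism F -> (forall x, nrm (F << x >>) <= B x) ->
  nrm (F D) <= \sum_(x <- dom D) `|coeff x D| * B x.
Proof.
move=> hF hB.
rewrite -{1}(freeg_sumE D) (addFsum hF).
apply: le_trans (nrm_sum _ _ _) _.
apply: ler_sum => x _.
rewrite -[coeff x D]intz -freegU_mulz (addFMz hF) -scaleZ.
apply: le_trans (nrmZ _ _) _; rewrite intz; apply: ler_wpM2l => //.
Qed.


Section Tup.
Variable S : choiceType.

Definition swi n (i : 'I_n) (m : 'I_n.+1) : 'I_n.+1 :=
  if nat_of_ord m == nat_of_ord i then fintype.lift ord0 i
  else if nat_of_ord m == (nat_of_ord i).+1 then widen_ord (leqnSn n) i else m.

Lemma swiE n (i : 'I_n) m :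
  nat_of_ord (swi i m) = if nat_of_ord m == nat_of_ord i then (nat_of_ord i).+1
                  else if nat_of_ord m == (nat_of_ord i).+1 then nat_of_ord i else nat_of_ord m.
Proof. by rewrite /swi; case: ifP => _ //; case: ifP. Qed.

Lemma swiK n (i : 'I_n) : involutive (swi i).
Proof. move=> m; apply: ord_inj; rewrite !swiE; repeat case: ifP; lia. Qed.

Definition sw n (i : 'I_n) (x : n.+1.-tuple S) : n.+1.-tuple S :=
  [tuple tnth x (swi i m) | m < n.+1].

Lemma sw_perm n (i : 'I_n) (x : n.+1.-tuple S) : perm_eq (sw i x) x.
Proof.
have -> : val (sw i x) = map (tnth x) (map (swi i) (enum 'I_n.+1)).
  by rewrite /sw /= -map_comp.
rewrite -[X in perm_eq _ X]map_tnth_enum; apply: perm_map.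
apply: uniq_perm; first by rewrite map_inj_uniq ?enum_uniq //; exact: can_inj (swiK i).
  exact: enum_uniq.
move=> m; rewrite mem_enum; apply/mapP; exists (swi i m); by rewrite ?mem_enum ?swiK.
Qed.

Lemma face_sw1 k (i : 'I_k.+1) (x : (k.+2).-tuple S) :
  face (widen_ord (leqnSn _) i) (sw i x) = face (fintype.lift ord0 i) x.
Proof.
apply: eq_from_tnth => m; rewrite !tnth_mktuple; congr tnth; apply: ord_inj.
rewrite swiE /= /bump; repeat case: ifP; lia.
Qed.

Lemma face_sw2 k (i : 'I_k.+1) (x : (k.+2).-tuple S) :
  face (fintype.lift ord0 i) (sw i x) = face (widen_ord (leqnSn _) i) x.
Proof.
apply: eq_from_tnth => m; rewrite !tnth_mktuple; congr tnth; apply: ord_inj.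
rewrite swiE /= /bump; repeat case: ifP; lia.
Qed.

Lemma face_sw3 k (i : 'I_k.+1) (j : 'I_k.+2) (x : (k.+2).-tuple S) :
  nat_of_ord j != nat_of_ord i -> nat_of_ord j != (nat_of_ord i).+1 ->
  exists i' : 'I_k, face j (sw i x) = sw i' (face j x).
Proof.
move=> h1 h2.
have hi : ((if (nat_of_ord j < nat_of_ord i)%N then (nat_of_ord i).-1 else nat_of_ord i) < k)%N.
  have := ltn_ord i; have := ltn_ord j; case: ifP; lia.
exists (Ordinal hi).
apply: eq_from_tnth => m; rewrite !tnth_mktuple; congr tnth; apply: ord_inj.
rewrite swiE /= swiE /= /bump; move: h1 h2; repeat case: ifP; lia.
Qed.

Lemma sw_eq n (i : 'I_n) (x : n.+1.-tuple S) :
  tnth x (widen_ord (leqnSn n) i) = tnth x (fintype.lift ord0 i) -> sw i x = x.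
Proof.
move=> e; apply: eq_from_tnth => m; rewrite tnth_mktuple /swi.
case: ifP => h1.
  by rewrite -e; congr tnth; apply: ord_inj => /=; apply/eqP; rewrite eq_sym.
case: ifP => h2 //.
by rewrite e; congr tnth; apply: ord_inj; rewrite /= /bump; move: h2; lia.
Qed.

End Tup.

Section Ch.
Variable S : choiceType.

Lemma bdU k (x : (k.+2).-tuple S) :
  bd (<< x >> : chains S k.+1) =
  \sum_(j < k.+2) ((-1) ^+ j : int) *: (<< face j x >> : chains S k).
Proof. by rewrite /bd fgliftU. Qed.

Lemma bd_add k : GRing.zmod_morphism (@bd S k). Proof. exact: fglift_add. Qed.

Definition cone k (v : S) (d : chains S k) : chains S k.+1 :=
  fglift (fun y : (k.+1).-tuple S => (<< cons_tuple v y >> : chains S k.+1)) d.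

Lemma cone_add k v : GRing.zmod_morphism (@cone k v). Proof. exact: fglift_add. Qed.
Lemma coneU k v (y : (k.+1).-tuple S) : cone v << y >> = << cons_tuple v y >>.
Proof. exact: fgliftU. Qed.

Lemma face0 k v (y : (k.+1).-tuple S) : face ord0 (cons_tuple v y) = y.
Proof. apply: eq_from_tnth => m; rewrite tnth_mktuple; exact: tnthS. Qed.

Lemma faceS k v (j : 'I_k.+2) (y : (k.+2).-tuple S) :
  face (fintype.lift ord0 j) (cons_tuple v y) = cons_tuple v (face j y).
Proof.
apply: eq_from_tnth => m; rewrite tnth_mktuple.
case: (unliftP ord0 m) => [m'|] ->.
- have -> : fintype.lift (fintype.lift ord0 j) (fintype.lift ord0 m') =
            fintype.lift ord0 (fintype.lift j m').
    by apply: ord_inj; rewrite /= /bump; lia.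
  by rewrite !tnthS tnth_mktuple.
- have -> : fintype.lift (fintype.lift ord0 j) ord0 = ord0.
    by apply: ord_inj; rewrite /= /bump; lia.
  by rewrite !tnth0.
Qed.

Lemma add_sub (U V : zmodType) (F H : U -> V) :
  GRing.zmod_morphism F -> GRing.zmod_morphism H ->
  GRing.zmod_morphism (fun x => F x - H x).
Proof.
move=> hF hH a b /=; rewrite hF hH !opprB addrACA [RHS]addrACA; congr (_ + _); exact: addrC.
Qed.

Lemma add_id (U : zmodType) : GRing.zmod_morphism (@id U). Proof. by []. Qed.

Lemma bd_cone k v (d : chains S k.+1) : bd (cone v d) = d - cone v (bd d).
Proof.
move: d; apply: (fg_ext (F1 := fun d => bd (cone v d))
                        (F2 := fun d => d - cone v (bd d))).
- by move=> a b /=; rewrite cone_add bd_add.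
- apply: (add_sub (F := id) (H := fun d => cone v (bd d))) => // a b /=.
  by rewrite bd_add cone_add.
move=> y /=; rewrite coneU bdU big_ord_recl face0 expr0 scale1r.
congr (_ + _); rewrite bdU (addFsum (@cone_add _ _)) -sumrN.
apply: eq_bigr => j _.
rewrite faceS (addFZ _ _ (@cone_add _ _)) coneU /= exprS mulN1r scaleNr.
by [].
Qed.

Lemma aug_add : GRing.zmod_morphism (@aug S). Proof. exact: degB. Qed.

Lemma face1 v (y : (1).-tuple S) :
  face (fintype.lift ord0 ord0) (cons_tuple v y) = [tuple v].
Proof.
apply: eq_from_tnth => m; rewrite tnth_mktuple (ord1 m).
have -> : fintype.lift (fintype.lift ord0 (@ord0 0)) ord0 = ord0.
  by apply: ord_inj.
by rewrite tnth0.
Qed.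

Lemma bd_cone0 v (d : chains S 0) : bd (cone v d) = d - aug d *: << [tuple v] >>.
Proof.
move: d; apply: (fg_ext (F1 := fun d => bd (cone v d))
                        (F2 := fun d => d - aug d *: << [tuple v] >>)).
- by move=> a b /=; rewrite cone_add bd_add.
- apply: (add_sub (F := id) (H := fun d => aug d *: << [tuple v] >>)) => // a b /=.
  by rewrite aug_add scalerBl.
move=> y /=; rewrite coneU bdU !big_ord_recl big_ord0 face0 addr0 expr0 scale1r.
by rewrite face1 /aug degU expr1 scaleN1r scale1r.
Qed.

Lemma aug_bd (c : chains S 1) : aug (bd c) = 0.
Proof.
move: c; apply: (fg_ext (F1 := fun c => aug (bd c)) (F2 := fun _ => 0)).
- by move=> a b /=; rewrite bd_add aug_add.
- by move=> a b; rewrite subrr.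
move=> y /=; rewrite bdU !big_ord_recl big_ord0 addr0 expr0 scale1r expr1 scaleN1r.
by rewrite aug_add /aug !degU subrr.
Qed.

Lemma tuple_cons n (x : (n.+1).-tuple S) : x = cons_tuple (thead x) (behead_tuple x).
Proof. exact: tuple_eta. Qed.

Lemma bd_bd k (c : chains S k.+2) : bd (bd c) = 0.
Proof.
elim: k c => [|k IH] c; move: c.
- apply: (fg_ext (F1 := fun c => bd (bd c)) (F2 := fun _ => 0)).
  + by move=> a b /=; rewrite !bd_add.
  + by move=> a b; rewrite subrr.
  move=> x /=; rewrite (tuple_cons x) -coneU bd_cone bd_add bd_cone0.
  by rewrite aug_bd scale0r subr0 subrr.
- apply: (fg_ext (F1 := fun c => bd (bd c)) (F2 := fun _ => 0)).
  + by move=> a b /=; rewrite !bd_add.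
  + by move=> a b; rewrite subrr.
  move=> x /=; rewrite (tuple_cons x) -coneU bd_cone bd_add bd_cone IH.
  by rewrite (addF0 (@cone_add _ _)) subr0 subrr.
Qed.
End Ch.

Section Eta.
Variables (G : groupType) (S : choiceType) (act : G -> S -> S) (s0 : S).
Hypotheses (hG : torsion_free G) (hact : is_action act) (hfree : free_action act).

Definition tact n (g : G) (x : n.-tuple S) : n.-tuple S := [tuple act g (tnth x i) | i < n].

Lemma tactE n g (x : n.-tuple S) : val (tact g x) = map (act g) x.
Proof. by rewrite /= map_comp map_tnth_enum. Qed.

Lemma act_add k g : GRing.zmod_morphism (@act_chain G S act k g).
Proof. exact: fglift_add. Qed.

Lemma actU k g (x : (k.+1).-tuple S) :
  act_chain act g (<< x >> : chains S k) = << tact g x >>.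
Proof. by rewrite /act_chain fgliftU. Qed.

Lemma face_tact k g (j : 'I_k.+2) (x : (k.+2).-tuple S) :
  face j (tact g x) = tact g (face j x).
Proof. by apply: eq_from_tnth => m; rewrite !tnth_mktuple. Qed.

Lemma bd_act k g (c : chains S k.+1) :
  bd (act_chain act g c) = act_chain act g (bd c).
Proof.
move: c; apply: (fg_ext (F1 := fun c => bd (act_chain act g c))
                        (F2 := fun c => act_chain act g (bd c))).
- by move=> a b /=; rewrite act_add bd_add.
- by move=> a b /=; rewrite bd_add act_add.
move=> x /=; rewrite actU !bdU (addFsum (@act_add _ _)).
apply: eq_bigr => j _; by rewrite (addFZ _ _ (@act_add _ _)) actU face_tact.
Qed.

Lemma cone_act k g v (d : chains S k) :
  cone (act g v) (act_chain act g d) = act_chain act g (cone v d).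
Proof.
move: d; apply: (fg_ext (F1 := fun d => cone (act g v) (act_chain act g d))
                        (F2 := fun d => act_chain act g (cone v d))).
- by move=> a b /=; rewrite act_add cone_add.
- by move=> a b /=; rewrite cone_add act_add.
move=> y /=; rewrite actU !coneU actU; congr << _ >>.
apply: eq_from_tnth => m; rewrite tnth_mktuple.
by case: (unliftP ord0 m) => [m'|] ->; rewrite ?tnthS ?tnth0 ?tnth_mktuple.
Qed.

Local Notation vs := (vsel act s0).

Local Unset Implicit Arguments.
Fixpoint eta k : chains S k -> chains S k :=
  match k return chains S k -> chains S k with
  | 0 => id
  | k'.+1 => fglift (fun x : (k'.+2).-tuple S =>
       if uniq x then cone (vs x) (eta k' (bd (<< x >> : chains S k'.+1))) else 0)
  end.
Local Set Implicit Arguments.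

Lemma eta_add k : GRing.zmod_morphism (eta k).
Proof. by case: k => [|k] //=; exact: fglift_add. Qed.

Lemma etaU k (x : (k.+2).-tuple S) :
  eta k.+1 << x >> = if uniq x then cone (vs x) (eta k (bd << x >>)) else 0.
Proof. by rewrite /= fgliftU. Qed.

Definition Alt k := forall (x : (k.+1).-tuple S) (i : 'I_k),
  eta k << sw i x >> = - eta k << x >>.

Lemma altbd k : Alt k -> forall (x : (k.+2).-tuple S) (i : 'I_k.+1),
  eta k (bd << sw i x >>) = - eta k (bd << x >>).
Proof.
move=> A x i; rewrite !bdU !(addFsum (@eta_add _)) -sumrN.
rewrite [RHS](reindex_inj (can_inj (swiK i))).
apply: eq_bigr => j _; rewrite !(addFZ _ _ (@eta_add _)).
case: (eqVneq (nat_of_ord j) i) => [e1|n1].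
  have ej : j = widen_ord (leqnSn _) i by apply: ord_inj.
  have es : swi i j = fintype.lift ord0 i.
    by apply: ord_inj; rewrite swiE e1 eqxx /= /bump; lia.
  rewrite es; have -> : face j (sw i x) = face (fintype.lift ord0 i) x.
    by rewrite ej face_sw1.
  rewrite -scaleNr; congr (_ *: _); rewrite /= /bump e1 add1n exprS mulN1r opprK.
  by [].
case: (eqVneq (nat_of_ord j) i.+1) => [e2|n2].
  have ej : j = fintype.lift ord0 i by apply: ord_inj; rewrite /= /bump; lia.
  have es : swi i j = widen_ord (leqnSn _) i.
    by apply: ord_inj; rewrite swiE e2 eqxx /=; case: ifP => //; lia.
  rewrite es; have -> : face j (sw i x) = face (widen_ord (leqnSn _) i) x.
    by rewrite ej face_sw2.
  rewrite -scaleNr; congr (_ *: _); rewrite /= e2 exprS mulN1r.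
  by [].
have es : swi i j = j.
  by apply: ord_inj; rewrite swiE (negbTE n1) (negbTE n2).
rewrite es; have [i' ->] := face_sw3 x n1 n2.
by rewrite A scalerN.
Qed.

Lemma nth_sw n (i : 'I_n) (y : n.+1.-tuple S) m : (m < n.+1)%N ->
  nth s0 (sw i y) m =
  nth s0 y (if m == nat_of_ord i then (nat_of_ord i).+1
            else if m == (nat_of_ord i).+1 then nat_of_ord i else m).
Proof.
move=> hm.
have -> : nth s0 (sw i y) m = tnth (sw i y) (Ordinal hm) by rewrite (tnth_nth s0).
by rewrite tnth_mktuple (tnth_nth s0) swiE.
Qed.

Lemma killbd k : Alt k -> forall x : (k.+2).-tuple S, ~~ uniq x -> eta k (bd << x >>) = 0.
Proof.
move=> A x /(uniqPn s0) [a [b [ab]]]; rewrite size_tuple => bk he.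
suff : forall d (y : (k.+2).-tuple S) a b, b = (a + d.+1)%N -> (b < k.+2)%N ->
         nth s0 y a = nth s0 y b -> eta k (bd << y >>) = 0.
  by move/(_ (b - a).-1 x a b); apply => //; lia.
elim=> [|d IH] y a' b' eb hb hy.
  have ha : (a' < k.+1)%N by lia.
  apply: fg_tf.
  have e : sw (Ordinal ha) y = y.
    apply: sw_eq; rewrite !(tnth_nth s0) /= hy eb; congr nth; rewrite /bump; lia.
  by rewrite -{1}e altbd.
have hi : (b'.-1 < k.+1)%N by lia.
set y' := sw (Ordinal hi) y.
have hy' : nth s0 y' a' = nth s0 y' b'.-1.
  rewrite /y' !nth_sw /=; try lia.
  have -> : (if a' == b'.-1 then b'.-1.+1 else if a' == b'.-1.+1 then b'.-1 else a') = a'.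
    by repeat case: ifP; lia.
  have -> : (if b'.-1 == b'.-1 then b'.-1.+1 else if b'.-1 == b'.-1.+1 then b'.-1 else b'.-1) = b'.
    by rewrite eqxx; lia.
  exact: hy.
have := IH y' a' b'.-1 ltac:(lia) ltac:(lia) hy'.
rewrite /y' altbd // => /eqP; rewrite oppr_eq0 => /eqP.
by [].
Qed.

Lemma alt_all k : Alt k.
Proof.
elim: k => [|k IH] x i; first by case: i.
rewrite !etaU (perm_uniq (sw_perm i x)).
have -> : vs (sw i x) = vs x.
  apply: (@vsel_mem _ _ _ s0 hG hact hfree _ _ (tnth (sw i x) ord0)); first exact: mem_tnth.
  exact: perm_mem (sw_perm i x).
rewrite altbd //; case: (uniq x); last by rewrite oppr0.
exact: (addFN (@cone_add _ _ _)).
Qed.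

Lemma chain k (c : chains S k.+1) : bd (eta k.+1 c) = eta k (bd c).
Proof.
elim: k c => [|k IH] c; move: c.
- apply: (fg_ext (F1 := fun c => bd (@eta 1 c)) (F2 := fun c => @eta 0 (bd c))).
  + by move=> a b; cbv beta; rewrite eta_add bd_add.
  + by move=> a b; cbv beta; rewrite bd_add.
  move=> x; cbv beta; rewrite etaU; case: ifP => ux.
    by rewrite bd_cone0 /= aug_bd scale0r subr0.
  by rewrite (addF0 (@bd_add _ _)); apply/esym/(killbd (@alt_all 0)); rewrite ux.
- apply: (fg_ext (F1 := fun c => bd (@eta k.+2 c)) (F2 := fun c => @eta k.+1 (bd c))).
  + by move=> a b; cbv beta; rewrite eta_add bd_add.
  + by move=> a b; cbv beta; rewrite bd_add eta_add.
  move=> x; cbv beta; rewrite etaU; case: ifP => ux.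
    by rewrite bd_cone IH bd_bd (addF0 (@eta_add _)) (addF0 (@cone_add _ _ _)) subr0.
  by rewrite (addF0 (@bd_add _ _)); apply/esym/(killbd (@alt_all _)); rewrite ux.
Qed.

Lemma equi k g (c : chains S k) : eta k (act_chain act g c) = act_chain act g (eta k c).
Proof.
elim: k c => [|k IH] c; first by [].
move: c; apply: (fg_ext (F1 := fun c => @eta k.+1 (act_chain act g c))
                        (F2 := fun c => act_chain act g (@eta k.+1 c))).
- by move=> a b; cbv beta; rewrite act_add eta_add.
- by move=> a b; cbv beta; rewrite eta_add act_add.
move=> x; cbv beta; rewrite actU !etaU.
have -> : uniq (tact g x) = uniq x by rewrite tactE map_inj_uniq //; exact: act_inj.
case: ifP => ux; last by rewrite (addF0 (@act_add _ _)).
rewrite tactE (@vsel_act _ _ _ s0 hG hact hfree _ g (tnth x ord0)) ?mem_tnth //.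
by rewrite -actU bd_act IH cone_act.
Qed.

Lemma nrm_eta k (x : (k.+1).-tuple S) :
  nrm (eta k (<< x >> : chains S k)) <= (if uniq x then (k.+1)`!%:R else 0).
Proof.
elim: k x => [|k IH] x.
  have -> : uniq x = true by case: x => [[|a [|b s]]] //.
  by rewrite /= nrmU.
rewrite etaU; case: ifP => ux; last by rewrite nrm0.
have h1 : forall d : chains S k, nrm (cone (vs x) d) <= nrm d.
  move=> d; apply: le_trans (nrm_bound (B := fun _ => 1) d (@cone_add _ _ _) _) _.
    by move=> y; rewrite coneU nrmU.
  by rewrite /nrm; under eq_bigr do rewrite mulr1.
apply: le_trans; first exact: h1.
rewrite bdU (addFsum (@eta_add _)).
apply: le_trans (nrm_sum _ _ _) _.
apply: (@le_trans _ _ (\sum_(j < k.+2) ((k.+1)`!%:R : int))).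
-
  apply: ler_sum => j _; rewrite (addFZ _ _ (@eta_add _)).
  apply: le_trans (nrmZ _ _) _.
  rewrite normrX normrN normr1 expr1n mul1r.
  apply: le_trans (IH _) _; case: ifP => _ //.
have -> : (k.+2)`! = ((k.+1)`! * k.+2)%N by rewrite factS mulnC.
by rewrite natrM mulr_natr sumr_const card_ord.
Qed.

End Eta.

Unset Implicit Arguments.
Theorem proposition5p9 (G : groupType) (S : choiceType) (act : G -> S -> S)
  (hG : torsion_free G) (hact : is_action act) (hfree : free_action act)
  (s0 : S) :
  exists eta : forall k : nat, chains S k -> chains S k,
    [/\ (forall k, GRing.zmod_morphism (eta k)),
        (forall k (g : G) (c : chains S k),
            eta k (act_chain act g c) = act_chain act g (eta k c)),
        (forall k (c : chains S k.+1), bd (eta k.+1 c) = eta k (bd c)),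
        (forall c : chains S 0%N, aug (eta 0%N c) = aug c) &
        (forall k (c : chains S k),
            l1norm (eta k c) <= ((k.+1)`!)%:R * essnorm c)].
Proof.
exists (@eta G S act s0); split.
- move=> k; exact: eta_add.
- move=> k g c; exact: equi.
- move=> k c; exact: chain.
- by [].
move=> k c.
have H := (nrm_bound (B := fun x : (k.+1).-tuple S => if uniq x then (k.+1)`!%:R else 0) c
                  (@eta_add _ _ act s0 k) (@nrm_eta _ _ act s0 k)).
have -> : l1norm (eta G S act s0 k c) = nrm (eta G S act s0 k c) by [].
apply: (le_trans H); rewrite /essnorm mulr_sumr [X in _ <= X]big_mkcond /=.
apply: ler_sum => x _; rewrite /essential; case: ifP => _; [by rewrite mulrC | by rewrite !mulr0].
Qed.
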